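(* Let $I,J\subseteq\mathbb{R}$ be intervals, $\tilde J\subseteq\mathbb{R}$, let $t:I\times J\to\tilde J$ and $h:I\times J\to(0,\infty)$ be such that $(g\circ t)\cdot h$ is competitorblind for every bounded continuous $g:\mathbb{R}\to\mathbb{R}$. Then $t$ is not injective.
   Context: Two finite measures $\alpha,\beta$ on $\mathbb{R}^2$ are competitors if they have the same first marginal $\alpha_0$ and the same second marginal, and for disintegrations $(\alpha_x),(\beta_x)$ with respect to $\alpha_0$ one has $\int y\,\alpha_x(dy)=\int y\,\beta_x(dy)$ for $\alpha_0$-a.e. $x$. A function $f$ on a rectangle $A\times B$ is called competitorblind if $\int f\,d\alpha=\int f\,d\beta$ whenever $\alpha,\beta$ are competitors concentrated on $A\times B$. *)

(* Defs.v *)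
From HB Require Import structures.
From mathcomp Require Import all_boot all_order all_algebra.
From mathcomp Require Import all_classical all_reals all_analysis.
From mathcomp Require Import measurable_realfun.
Set Implicit Arguments. Unset Strict Implicit. Unset Printing Implicit Defensive.
Import Order.TTheory GRing.Theory Num.Theory.
Import numFieldNormedType.Exports.
Local Open Scope classical_set_scope.
Local Open Scope ring_scope.

Section Competitors.
Variable R : realType.
Local Notation T := ((R : measurableType _) * (R : measurableType _))%type.

Definition marg1 (a : set T -> \bar R) : set R -> \bar R :=
  fun A => a (fst @^-1` A).
Definition marg2 (a : set T -> \bar R) : set R -> \bar R :=
  fun B => a (snd @^-1` B).

(* k = (k_x)_x is a disintegration of alpha with respect to its first
   marginal alpha_0:  k is a measurable family of measures and
   alpha (A x B) = \int_A k_x(B) alpha_0(dx) for measurable A, B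
   (the integral against alpha_0 = fst_# alpha written as an integral
   against alpha of x = z.1, i.e. by definition of the image measure). *)
Definition disintegration (a : {measure set T -> \bar R})
  (k : R -> {measure set R -> \bar R}) : Prop :=
  (forall B : set R, measurable B -> measurable_fun [set: R] (fun x : R => (k x B : \bar R))) /\
  (forall A B : set R, measurable A -> measurable B ->
     a (A `*` B) = (\int[a]_(z in fst @^-1` A) k z.1 B)%E).

Definition competitors (a b : {finite_measure set T -> \bar R}) : Prop :=
  (forall A : set R, measurable A -> marg1 a A = marg1 b A) /\
  (forall B : set R, measurable B -> marg2 a B = marg2 b B) /\
  exists ka kb : R -> {measure set R -> \bar R},
    disintegration a ka /\ disintegration b kb /\
    (* for alpha_0-a.e. x the barycenters exist and coincide *)
    exists N : set R, measurable N /\ marg1 a N = 0%E /\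
      forall x, ~ N x ->
        (ka x).-integrable [set: R] (fun y => y%:E) /\
        (kb x).-integrable [set: R] (fun y => y%:E) /\
        (\int[ka x]_y y%:E = \int[kb x]_y y%:E)%E.

Definition concentrated_on (a : set T -> \bar R) (A B : set R) : Prop :=
  a (~` (A `*` B)) = 0%E.

Definition competitorblind (A B : set R) (f : T -> R) : Prop :=
  measurable_fun (A `*` B) f /\
  forall a b : {finite_measure set T -> \bar R},
    competitors a b -> concentrated_on a A B -> concentrated_on b A B ->
    a.-integrable (A `*` B) (fun z => (f z)%:E) ->
    b.-integrable (A `*` B) (fun z => (f z)%:E) ->
    (\int[a]_(z in A `*` B) (f z)%:E = \int[b]_(z in A `*` B) (f z)%:E)%E.

End Competitors.

(* Main.v *)
Require Import Defs.
From HB Require Import structures.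
From mathcomp Require Import all_boot all_order all_algebra.
From mathcomp Require Import all_classical all_reals all_analysis.
From mathcomp Require Import measurable_realfun.
Import Order.TTheory GRing.Theory Num.Theory.
Import numFieldNormedType.Exports.
From mathcomp Require Import lra.
Local Open Scope classical_set_scope.
Local Open Scope ring_scope.

Section Helpers.
Context (R : realType).
Local Notation T := ((R : measurableType _) * (R : measurableType _))%type.

Definition m4 (p1 p2 p3 p4 : T) : set T -> \bar R :=
  measure_add (measure_add (\d_p1) (\d_p2)) (measure_add (\d_p3) (\d_p4)).

HB.instance Definition _ p1 p2 p3 p4 := Measure.on (m4 p1 p2 p3 p4).

Lemma m4E p1 p2 p3 p4 A : m4 p1 p2 p3 p4 A =
  ((p1 \in A)%:R + (p2 \in A)%:R + (p3 \in A)%:R + (p4 \in A)%:R)%:E.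
Proof. rewrite /m4 /measure_add /msum /= !big_ord_recl !big_ord0 /= /msum !big_ord_recl !big_ord0 /= /dirac !indicE !adde0 -!EFinD !addrA. reflexivity. Qed.

Lemma m4_fin p1 p2 p3 p4 : fin_num_fun (m4 p1 p2 p3 p4).
Proof. by move=> A mA; rewrite m4E. Qed.

HB.instance Definition _ p1 p2 p3 p4 :=
  @Measure_isFinite.Build _ T R (m4 p1 p2 p3 p4) (m4_fin p1 p2 p3 p4).

Lemma m4_int p1 p2 p3 p4 (D : set T) (f : T -> \bar R) :
  measurable D -> measurable_fun D f -> (forall x, D x -> 0 <= f x)%E ->
  (\int[m4 p1 p2 p3 p4]_(x in D) f x =
   \d_p1 D * f p1 + \d_p2 D * f p2 + (\d_p3 D * f p3 + \d_p4 D * f p4))%E.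
Proof.
move=> mD mf f0.
rewrite /m4 ge0_integral_measure_add // !ge0_integral_measure_add //.
by rewrite !integral_dirac.
Qed.


Definition half : {nonneg R} := (2^-1 : R)%:nng.

Definition K2 (y1 y3 : R) : set R -> \bar R :=
  mscale half (measure_add (\d_y1) (\d_y3)).

HB.instance Definition _ y1 y3 := Measure.on (K2 y1 y3).

Lemma K2E y1 y3 B : K2 y1 y3 B = (2^-1 * ((y1 \in B)%:R + (y3 \in B)%:R))%:E.
Proof.
rewrite /K2 /mscale /= /msum !big_ord_recl big_ord0 /= /dirac !indicE adde0 -!EFinD -EFinM.
reflexivity.
Qed.

Lemma K2_int0 y1 y3 (f : R -> \bar R) : measurable_fun setT f ->
  (forall x, 0 <= f x)%E ->
  (\int[K2 y1 y3]_x f x = (2^-1)%:E * (f y1 + f y3))%E.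
Proof.
move=> mf f0.
rewrite /K2 ge0_integral_mscale //.
rewrite ge0_integral_measure_add //.
by rewrite !integral_dirac // !diracT !mul1e.
Qed.

Lemma K2_integrable y1 y3 : (K2 y1 y3).-integrable setT (fun y => y%:E).
Proof.
apply/integrableP; split; first exact/measurable_EFinP.
rewrite K2_int0 //; last by apply: measurableT_comp => //; exact/measurable_EFinP.
by rewrite /= -!EFinD -EFinM ltry.
Qed.

Lemma K2_bary y1 y3 : (\int[K2 y1 y3]_y y%:E = (2^-1 * (y1 + y3))%:E)%E.
Proof.
have mf : measurable_fun [set: R] (fun y : R => y%:E) by exact/measurable_EFinP.
rewrite integralE.
rewrite K2_int0 //; last by apply: measurable_funepos.
rewrite K2_int0 //; last by apply: measurable_funeneg.
have P (y : R) : ((fun z : R => z%:E)^\+ y = (Num.max y 0)%:E)%E.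
  by rewrite funeposE; exact: (esym (EFin_max y 0)).
have N (y : R) : ((fun z : R => z%:E)^\- y = (Num.max (- y) 0)%:E)%E.
  by rewrite funenegE; exact: (esym (EFin_max (- y) 0)).
rewrite !P !N -!EFinD.
congr EFin; rewrite -mulrBr; congr (_ * _).
have H (y : R) : Num.max y 0 - Num.max (- y) 0 = y.
  by rewrite !maxr_absE !subr0 normrN; lra.
by rewrite opprD addrACA !H.
Qed.

Lemma dirac_integrable (y : R) : (\d_y).-integrable setT (fun y : R => y%:E).
Proof.
apply/integrableP; split; first exact/measurable_EFinP.
by rewrite integral_dirac ?diracT ?mul1e ?ltry //; apply: measurableT_comp => //; exact/measurable_EFinP.
Qed.

Lemma dirac_bary (y : R) : (\int[\d_y]_x x%:E = y%:E)%E.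
Proof. by rewrite integral_dirac ?diracT ?mul1e //; exact/measurable_EFinP. Qed.


Lemma in_X (A B : set R) (x y : R) : ((x, y) \in A `*` B) = (x \in A) && (y \in B).
Proof.
apply/idP/andP => [/set_mem [/= hA hB]|[/set_mem hA /set_mem hB]]; first by split; apply/mem_set.
by apply/mem_set.
Qed.

Lemma in_fst (A : set R) (x y : R) : ((x, y) \in (@fst R R) @^-1` A) = (x \in A).
Proof. by apply/idP/idP => /set_mem h; apply/mem_set. Qed.

Lemma in_snd (A : set R) (x y : R) : ((x, y) \in (@snd R R) @^-1` A) = (y \in A).
Proof. by apply/idP/idP => /set_mem h; apply/mem_set. Qed.

Definition kern (xs y1 y2 y3 : R) : R -> {measure set R -> \bar R} :=
  fun x => if x == xs then (K2 y1 y3 : {measure set R -> \bar R}) else \d_y2.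

Lemma kern_meas xs y1 y2 y3 B :
  measurable_fun [set: R] (fun x => kern xs y1 y2 y3 x B).
Proof.
rewrite (_ : (fun x => _) = fun x => if x == xs then K2 y1 y3 B else \d_y2 B); last first.
  by apply/funext => x; rewrite /kern; case: ifP.
apply: measurable_fun_ifT => //.
by apply: measurable_fun_eqr => //.
Qed.

Lemma kernE xs y1 y2 y3 x B : kern xs y1 y2 y3 x B =
  if x == xs then (2^-1 * ((y1 \in B)%:R + (y3 \in B)%:R))%:E
  else ((y2 \in B)%:R)%:E.
Proof. rewrite /kern; case: ifP => _; [exact: K2E | exact: diracE]. Qed.

Lemma m4_intD p1 p2 p3 p4 (D : set T) (f : T -> \bar R) :
  measurable D -> measurable_fun D f -> (forall x, D x -> 0 <= f x)%E ->
  D p1 -> D p2 -> D p3 -> D p4 ->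
  (\int[m4 p1 p2 p3 p4]_(x in D) f x = f p1 + f p2 + (f p3 + f p4))%E.
Proof.
move=> mD mf f0 D1 D2 D3 D4; rewrite m4_int // !diracE !mem_set //.
by rewrite !mul1e.
Qed.

Lemma m4_conc p1 p2 p3 p4 (D : set T) :
  D p1 -> D p2 -> D p3 -> D p4 -> m4 p1 p2 p3 p4 (~` D) = 0%E.
Proof.
move=> D1 D2 D3 D4; rewrite m4E !memNset /=.
- by rewrite !addr0.
all: by rewrite /setC /= => /(_ _).
Qed.

Lemma bump_cont (c d : R) : continuous (fun r : R => Num.max 0 (d - `|r - c|)).
Proof.
move=> x.
have -> : (fun r : R => Num.max 0 (d - `|r - c|)) =
  ((cst 0 : R -> R^o) \max (fun r : R => d - `|r - c|)) by [].
apply: continuous_max; first exact: cst_continuous.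
apply: cvgB; first exact: cvg_cst.
apply: cvg_norm; apply: cvgB; [exact: cvg_id | exact: cvg_cst].
Qed.

End Helpers.
Arguments m4 {R}. Arguments K2 {R}. Arguments kern {R}.

Section Main.
Context (R : realType) (x1 x2 y1 y3 : R) (hx : x1 != x2).
Local Notation T := ((R : measurableType _) * (R : measurableType _))%type.
Let y2 := 2^-1 * (y1 + y3).

Definition alpha := m4 ((x1, y2) : T) (x1, y2) (x2, y1) (x2, y3).
Definition beta := m4 ((x1, y1) : T) (x1, y3) (x2, y2) (x2, y2).

Lemma meas_fst (A : set R) : measurable A -> measurable ((@fst R R) @^-1` A : set T).
Proof. by move=> mA; rewrite -[_ @^-1` _]setTI; exact: measurable_fst. Qed.

Lemma disint_gen (xs : R) (p1 p2 p3 p4 : T) A B :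
  measurable A -> measurable B ->
  (\int[m4 p1 p2 p3 p4]_(z in (@fst R R) @^-1` A) kern xs y1 y2 y3 z.1 B =
   \d_p1 ((@fst R R) @^-1` A) * kern xs y1 y2 y3 p1.1 B +
   \d_p2 ((@fst R R) @^-1` A) * kern xs y1 y2 y3 p2.1 B +
  (\d_p3 ((@fst R R) @^-1` A) * kern xs y1 y2 y3 p3.1 B +
   \d_p4 ((@fst R R) @^-1` A) * kern xs y1 y2 y3 p4.1 B))%E.
Proof.
move=> mA mB; rewrite m4_int //; first exact: meas_fst.
apply: measurable_funTS.
rewrite (_ : (fun x : T => _) = (fun x => kern xs y1 y2 y3 x B) \o fst) //.
apply: measurableT_comp; [exact: kern_meas | exact: measurable_fst].
Qed.

Lemma disint_alpha : disintegration alpha (kern x2 y1 y2 y3).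
Proof.
split; first by move=> B mB; exact: kern_meas.
move=> A B mA mB; rewrite disint_gen //.
rewrite /alpha /= m4E !diracE !kernE /= eqxx (negbTE hx) !in_X !in_fst.
rewrite -!EFinM -!EFinD; congr EFin.
by case: (x1 \in A); case: (x2 \in A); case: (y1 \in B); case: (y2 \in B); case: (y3 \in B); rewrite /=; lra.
Qed.

Lemma disint_beta : disintegration beta (kern x1 y1 y2 y3).
Proof.
split; first by move=> B mB; exact: kern_meas.
move=> A B mA mB; rewrite disint_gen //.
rewrite /beta /= m4E !diracE !kernE /= eqxx eq_sym (negbTE hx) !in_X !in_fst.
rewrite -!EFinM -!EFinD; congr EFin.
by case: (x1 \in A); case: (x2 \in A); case: (y1 \in B); case: (y2 \in B); case: (y3 \in B); rewrite /=; lra.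
Qed.

Lemma comp_ab : competitors alpha beta.
Proof.
split.
  by move=> A mA; rewrite /marg1 /alpha /beta /= !m4E !in_fst.
split.
  move=> B mB; rewrite /marg2 /alpha /beta /= !m4E !in_snd; congr EFin.
  by case: (y1 \in B); case: (y2 \in B); case: (y3 \in B); rewrite /=; lra.
exists (kern x2 y1 y2 y3), (kern x1 y1 y2 y3).
split; first exact: disint_alpha.
split; first exact: disint_beta.
exists set0; split; first exact: measurable0.
split; first by rewrite /marg1 preimage_set0 measure0.
move=> x _.
have IK (xs : R) : (kern xs y1 y2 y3 x).-integrable [set: R] (fun y => y%:E).
  rewrite /kern; case: ifP => _; [exact: K2_integrable | exact: dirac_integrable].
have BK (xs : R) : (\int[kern xs y1 y2 y3 x]_y y%:E = y2%:E)%E.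
  rewrite /kern; case: ifP => _; [exact: K2_bary | exact: dirac_bary].
by split; [|split]; rewrite ?BK.
Qed.

End Main.

Theorem lemma4p7 (R : realType) (I J : interval R) (Jt : set R)
  (t h : R -> R -> R)
  (hI : exists a b, a < b /\ a \in I /\ b \in I)
  (hJ : exists a b, a < b /\ a \in J /\ b \in J)
  (ht : forall x y, x \in I -> y \in J -> Jt (t x y))
  (hh : forall x y, x \in I -> y \in J -> 0 < h x y)
  (hblind : forall g : R -> R, continuous g ->
      (exists M : R, forall r, `|g r| <= M) ->
      competitorblind [set` I] [set` J]
        (fun z : R * R => g (t z.1 z.2) * h z.1 z.2)) :
  ~ (forall x1 y1 x2 y2, x1 \in I -> y1 \in J -> x2 \in I -> y2 \in J ->
       t x1 y1 = t x2 y2 -> x1 = x2 /\ y1 = y2).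
Proof.
move=> inj.
case: hI => a [b [ab [aI bI]]]; case: hJ => c [e [ce [cJ eJ]]].
have hx : a != b by rewrite lt_eqF.
set y2 := 2^-1 * (c + e).
have y2J : y2 \in J.
  by apply: (interval_is_interval cJ eJ); apply/andP; split; rewrite /y2; lra.
set c0 := t a y2.
have ne (x y : R) : x \in I -> y \in J -> (x != a) || (y != y2) -> 0 < `|c0 - t x y|.
  move=> xI yJ hne; rewrite normr_gt0 subr_eq0; apply/negP => /eqP E.
  have [E1 E2] := inj _ _ _ _ aI y2J xI yJ E.
  by move: hne; rewrite E1 E2 !eqxx.
pose d : R := Num.min (Num.min `|c0 - t b c| `|c0 - t b e|)
   (Num.min `|c0 - t a c| (Num.min `|c0 - t a e| `|c0 - t b y2|)).
have d0 : 0 < d.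
  have hba : b != a by rewrite eq_sym.
  have hcy : c != y2 by rewrite lt_eqF // /y2; lra.
  have hey : e != y2 by rewrite gt_eqF // /y2; lra.
  by rewrite /d !lt_min !ne ?hba ?hcy ?hey ?orbT.
pose g := fun r : R => Num.max 0 (d - `|r - c0|).
have gz (x y : R) : d <= `|c0 - t x y| -> g (t x y) = 0.
  move=> hd; rewrite /g maxr_absE sub0r normrN add0r (distrC (t x y)).
  rewrite (ler0_norm (_ : d - _ <= 0)); last by rewrite subr_le0.
  by rewrite addrN mul0r.
have gc : g c0 = d.
  by rewrite /g subrr normr0 subr0 maxr_absE sub0r normrN add0r gtr0_norm //; lra.
have g0 r : 0 <= g r.
  rewrite /g maxr_absE sub0r normrN add0r.
  have := ler_norm (- (d - `|r - c0|)); rewrite normrN; lra.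
have gd r : g r <= d.
  rewrite /g maxr_absE sub0r normrN add0r.
  have := ler_normB d `|r - c0|; rewrite normr_id (gtr0_norm d0).
  have := normr_ge0 (r - c0); lra.
have gbd : exists M : R, forall r, `|g r| <= M.
  by exists d => r; rewrite ger0_norm.
have [mf blind] := hblind g (bump_cont _ c0 d) gbd.
set D := [set` I] `*` [set` J].
have mD : measurable D by apply: measurableX.
have DP (x y : R) : x \in I -> y \in J -> D (x, y) by [].
pose F := fun z : R * R => (g (t z.1 z.2) * h z.1 z.2)%:E.
have mF : measurable_fun D F by exact/measurable_EFinP.
have F0 : forall z, D z -> (0 <= F z)%E.
  by move=> [x y] [/= xI yJ]; rewrite lee_fin mulr_ge0 // ltW // hh.
have maF : measurable_fun D (fun z => `|F z|)%E.
  rewrite (_ : (fun z => _) = abse \o F) //; exact: measurableT_comp mF.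
have iA : (@alpha R a b c e).-integrable D F.
  apply/integrableP; split => //.
  rewrite /alpha m4_intD //; try exact: DP.
  by rewrite /F /= -!EFinD ltry.
have iB : (@beta R a b c e).-integrable D F.
  apply/integrableP; split => //.
  rewrite /beta m4_intD //; try exact: DP.
  by rewrite /F /= -!EFinD ltry.
have cA : concentrated_on (alpha R a b c e) [set` I] [set` J].
  by rewrite /concentrated_on /alpha /=; apply: m4_conc; exact: DP.
have cB : concentrated_on (beta R a b c e) [set` I] [set` J].
  by rewrite /concentrated_on /beta /=; apply: m4_conc; exact: DP.
have := blind _ _ (@comp_ab R a b c e hx) cA cB iA iB.
rewrite /alpha /beta !m4_intD //; try exact: DP.
rewrite /F /= -/y2 -/c0 gc !gz; first last.
all: try by rewrite /d !ge_min lexx ?orbT.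
rewrite !mul0r !adde0 -!EFinD => /eqP; rewrite eqe => /eqP.
have := hh _ _ aI y2J => hp.
have : 0 < d * h a y2 by rewrite mulr_gt0.
lra.
Qed.
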